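(* Let $\mathcal N$ be an associative algebra over a field of characteristic $\neq 2$, let $H\in\mathcal N$, and for $F\in\mathcal N$ write $\dot F=[F,H]$ and $\ddot F=\dot{(\dot F)}$. Let $X_1,\dots,X_d\in\mathcal N$ and set $g_{ij}=[X_i,\dot X_j]$. Assume $[X_i,g_{jk}]=0$ for all $i,j,k$. Define $\nabla_i(F)=[F,\dot X_i]$ and $$\Gamma_{kij}=\tfrac12\big(\nabla_i g_{jk}+\nabla_j g_{ik}-\nabla_k g_{ij}\big).$$ Then for all $i,j,k$, $$\Gamma_{kij}=\tfrac12\,[X_i,[X_j,\ddot X_k]].$$
   Context: $[A,B]=AB-BA$ denotes the commutator. *)

(* Defs.v *)
From HB Require Import structures.
From mathcomp Require Import all_boot all_order all_algebra.
Set Implicit Arguments. Unset Strict Implicit. Unset Printing Implicit Defensive.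
Import GRing.Theory.
Local Open Scope ring_scope.

Definition commr (R : pzRingType) (x y : R) : R := x * y - y * x.

Section Defs.
Variables (K : fieldType) (A : algType K) (H : A).

Definition tdot (F : A) : A := commr F H.
Definition tddot (F : A) : A := tdot (tdot F).

Variables (d : nat) (X : 'I_d -> A).

Definition gmet (i j : 'I_d) : A := commr (X i) (tdot (X j)).
Definition nabla (i : 'I_d) (F : A) : A := commr F (tdot (X i)).
Definition Gamma (k i j : 'I_d) : A :=
  (2%:R : K)^-1 *: (nabla i (gmet j k) + nabla j (gmet i k) - nabla k (gmet i j)).
End Defs.

(* Main.v *)
Require Import Defs.
From HB Require Import structures.
From mathcomp Require Import all_boot all_order all_algebra.
Import GRing.Theory.
Local Open Scope ring_scope.
Section S.
Variable R : pzRingType.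
Implicit Types a b c x y z : R.
Lemma cBl x y z : commr (x - y) z = commr x z - commr y z.
Proof. rewrite /commr mulrBl mulrBr !opprB addrACA [RHS]addrACA [- (z*x) + _]addrC. by []. Qed.
Lemma cDr x y z : commr z (x + y) = commr z x + commr z y.
Proof. rewrite /commr mulrDl mulrDr opprD addrACA. by []. Qed.
Lemma cN x y : commr x y = - commr y x.
Proof. by rewrite /commr opprB. Qed.
Lemma c0r x : commr x 0 = 0.
Proof. by rewrite /commr mulr0 mul0r subrr. Qed.
Lemma c0l x : commr 0 x = 0.
Proof. by rewrite /commr mulr0 mul0r subrr. Qed.
Lemma cMr a b c : commr a (b*c) = commr a b * c + b * commr a c.
Proof. by rewrite /commr mulrBl mulrBr !mulrA addrA subrK. Qed.
Lemma cMl a b c : commr (a*b) c = a * commr b c + commr a c * b.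
Proof. by rewrite /commr mulrBl mulrBr !mulrA addrA subrK. Qed.
Lemma cder a b h : commr (commr a b) h = commr (commr a h) b + commr a (commr b h).
Proof.
transitivity (commr (a*b - b*a) h); first by [].
rewrite cBl !cMl. set Da := commr a h; set Db := commr b h. rewrite /commr (addrC (a*Db)) opprD addrACA. by [].
Qed.
Lemma cNl x y : commr (- x) y = - commr x y.
Proof. by rewrite /commr mulNr mulrN opprB opprK addrC. Qed.
Lemma cNr x y : commr y (- x) = - commr y x.
Proof. by rewrite cN cNl opprK -cN. Qed.
Lemma cjac a b c : commr a (commr b c) = commr (commr a b) c + commr b (commr a c).
Proof.
rewrite cN cder (cN b a) (cN c a) cNl cNr opprD !opprK. by [].
Qed.
End S.

Theorem lemma3p1 (K : fieldType) (A : algType K) (hK : 2%N \notin [pchar K])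
  (H : A) (d : nat) (X : 'I_d -> A) :
  (forall i j k : 'I_d, commr (X i) (gmet H X j k) = 0) ->
  forall i j k : 'I_d,
    Gamma H X k i j = (2%:R : K)^-1 *: commr (X i) (commr (X j) (tddot H (X k))).
Proof.
move=> h i j k; rewrite /Gamma; congr (_ *: _).
have e := congr1 (fun x => commr x H) (h i j k).
rewrite /= /gmet /tdot c0l in e.
set P := commr (X i) H in e *; set Q := commr (X j) H in e *; set R := commr (X k) H in e *.
rewrite (@cder _ (X i)) -/P (@cder _ (X j)) -/Q cDr in e.
rewrite /nabla /gmet /tddot /tdot -/P -/Q -/R.
move/eqP: e; rewrite addrA addrC addr_eq0 => /eqP ->.
rewrite (@cN _ P) cjac (@cN _ Q (commr (X i) R)).
move: (commr (commr (X j) R) P) (commr (commr (X i) R) Q) (commr (commr (X i) Q) R) => u v w.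
by rewrite !opprD !opprK -addrA (addrC (- w)).
Qed.
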